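(* Let $X$ be a space, $A\subset X$ and $x\in \operatorname{int}A$, and suppose the boundary $\partial A$ is a C-set in $X$. Then there is a clopen set $C\subset X$ with $x\in C$ and $C\cap\partial A=\varnothing$, and $C\cap\operatorname{int}A=C\cap\overline A$ is clopen in $X$. Consequently a space is rim-C (has a basis of open sets whose boundaries are C-sets) if and only if it is zero-dimensional.
   Context: All spaces are separable and metrizable. A subset $A$ of a space $X$ is a C-set in $X$ if $A$ is an intersection of clopen subsets of $X$ (the empty set counts as a C-set). *)

(* Defs.v *)
From Stdlib Require Import Reals.
Open Scope R_scope.

Record TopSpace := {
  carrier :> Type;
  is_open : (carrier -> Prop) -> Prop;
  open_full : is_open (fun _ => True);
  open_inter : forall U V, is_open U -> is_open V -> is_open (fun x => U x /\ V x);
  open_union : forall F : (carrier -> Prop) -> Prop,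
      (forall U, F U -> is_open U) -> is_open (fun x => exists U, F U /\ U x)
}.

Section Topo.
Variable X : TopSpace.

Definition is_closed (A : X -> Prop) : Prop := is_open X (fun x => ~ A x).
Definition is_clopen (A : X -> Prop) : Prop := is_open X A /\ is_closed A.

Definition interior (A : X -> Prop) : X -> Prop :=
  fun x => exists U, is_open X U /\ (forall y, U y -> A y) /\ U x.
Definition closure (A : X -> Prop) : X -> Prop :=
  fun x => forall U, is_open X U -> U x -> exists y, U y /\ A y.
Definition boundary (A : X -> Prop) : X -> Prop :=
  fun x => closure A x /\ ~ interior A x.

(* A is a C-set: an intersection of a family of clopen subsets of X
   (the empty set is allowed, being itself clopen). *)
Definition is_Cset (A : X -> Prop) : Prop :=
  exists F : (X -> Prop) -> Prop,
    (forall C, F C -> is_clopen C) /\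
    (forall x, A x <-> (forall C, F C -> C x)).

Definition is_basis (B : (X -> Prop) -> Prop) : Prop :=
  (forall V, B V -> is_open X V) /\
  (forall U x, is_open X U -> U x -> exists V, B V /\ V x /\ (forall y, V y -> U y)).

Definition rim_C : Prop :=
  exists B, is_basis B /\ (forall V, B V -> is_Cset (boundary V)).

Definition zero_dimensional : Prop :=
  exists B, is_basis B /\ (forall V, B V -> is_clopen V).

Definition metrizable : Prop :=
  exists d : X -> X -> R,
    (forall x y, 0 <= d x y) /\
    (forall x y, d x y = 0 <-> x = y) /\
    (forall x y, d x y = d y x) /\
    (forall x y z, d x z <= d x y + d y z) /\
    (forall U, is_open X U <->
       (forall x, U x -> exists eps, 0 < eps /\ (forall y, d x y < eps -> U y))).

Definition separable : Prop :=
  exists D : X -> Prop,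
    (exists f : nat -> option X, forall x, D x -> exists n, f n = Some x) /\
    (forall x, closure D x).

End Topo.

(* Main.v *)
Require Import Defs.
From Stdlib Require Import Classical FunctionalExtensionality PropExtensionality.

Section S.
Variable X : TopSpace.

Lemma open_ext (U V : X -> Prop) : is_open X U -> (forall x, U x <-> V x) -> is_open X V.
Proof.
  intros HU H. replace V with U; auto.
  apply functional_extensionality; intro x; apply propositional_extensionality; auto.
Qed.

Lemma open_empty : is_open X (fun _ => False).
Proof.
  eapply open_ext. apply (open_union X (fun _ => False)). tauto.
  intro x; split; [intros [U [[] _]] | tauto].
Qed.

Lemma open_union2 (U V : X -> Prop) : is_open X U -> is_open X V ->
  is_open X (fun x => U x \/ V x).
Proof.
  intros HU HV. eapply open_ext.
  apply (open_union X (fun W => W = U \/ W = V)).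
  intros W [-> | ->]; auto.
  intro x; split.
  - intros [W [[-> | ->] Hx]]; auto.
  - intros [H|H]; eauto.
Qed.

Lemma interior_open (A : X -> Prop) : is_open X (interior X A).
Proof.
  eapply open_ext. apply (open_union X (fun U => is_open X U /\ (forall y, U y -> A y))).
  tauto.
  intro x; unfold interior; split.
  - intros [U [[H1 H2] H3]]; eauto.
  - intros [U [H1 [H2 H3]]]; eauto.
Qed.

Lemma closure_compl_open (A : X -> Prop) : is_open X (fun x => ~ closure X A x).
Proof.
  eapply open_ext.
  apply (open_union X (fun U => is_open X U /\ (forall y, U y -> ~ A y))). tauto.
  intro x; split.
  - intros [U [[HU Hd] Hx]] Hc. destruct (Hc U HU Hx) as [y [Hy Ay]].
    exact (Hd y Hy Ay).
  - intro Hn. unfold closure in Hn. apply not_all_ex_not in Hn as [U Hn].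
    apply imply_to_and in Hn as [HU Hn]. apply imply_to_and in Hn as [Hx Hn].
    exists U; split; [split|]; auto.
    intros y Hy Ay; apply Hn; eauto.
Qed.

Lemma interior_sub_closure (A : X -> Prop) x : interior X A x -> closure X A x.
Proof.
  intros [U [HU [Hs Hx]]] W HW Wx. exists x; split; auto.
Qed.

Lemma clopen_closure (C : X -> Prop) y : is_clopen X C -> closure X C y -> C y.
Proof.
  intros [_ Hc] Hcl. apply NNPP; intro Hn.
  destruct (Hcl _ Hc Hn) as [z [Hz Cz]]; auto.
Qed.

Lemma open_interior (U : X -> Prop) y : is_open X U -> U y -> interior X U y.
Proof. intros; exists U; auto. Qed.

Lemma part1 (A : X -> Prop) (x : X) :
      interior X A x ->
      is_Cset X (boundary X A) ->
      exists C : X -> Prop,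
        is_clopen X C /\ C x /\
        (forall y, C y -> ~ boundary X A y) /\
        (forall y, (C y /\ interior X A y) <-> (C y /\ closure X A y)) /\
        is_clopen X (fun y => C y /\ interior X A y).
Proof.
  intros Hx [F [HF Heq]].
  assert (Hnb : ~ boundary X A x) by (intros [_ H]; auto).
  rewrite Heq in Hnb. apply not_all_ex_not in Hnb as [C0 Hn].
  apply imply_to_and in Hn as [HC0 Hn].
  destruct (HF C0 HC0) as [Ho Hc].
  assert (Hdisj : forall y, ~ C0 y -> ~ boundary X A y).
  { intros y Hy Hb. apply Hy. apply (proj1 (Heq y) Hb). auto. }
  assert (Hiff : forall y, (~ C0 y /\ interior X A y) <-> (~ C0 y /\ closure X A y)).
  { intros y; split; intros [H1 H2]; split; auto.
    - apply interior_sub_closure; auto.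
    - apply NNPP; intro Hi. apply (Hdisj y H1); split; auto. }
  exists (fun y => ~ C0 y). split; [|split; [auto|split; [auto|split; [auto|]]]].
  - split; auto. eapply open_ext; [exact Ho|]. intro; split; [tauto|apply NNPP].
  - split.
    + apply open_inter; auto. apply interior_open.
    + eapply open_ext. apply (open_union2 _ _ Ho (closure_compl_open A)).
      intro y; split.
      * intros [H|H] [H1 H2]; auto. apply H. apply interior_sub_closure; auto.
      * intro H. destruct (classic (C0 y)); auto. right; intro Hc'.
        apply H. apply Hiff; auto.
Qed.

End S.

Theorem mainTheorem5 (X : TopSpace) (HsepX : separable X) (HmetX : metrizable X) :
  (forall (A : X -> Prop) (x : X),
      interior X A x ->
      is_Cset X (boundary X A) ->
      exists C : X -> Prop,
        is_clopen X C /\ C x /\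
        (forall y, C y -> ~ boundary X A y) /\
        (forall y, (C y /\ interior X A y) <-> (C y /\ closure X A y)) /\
        is_clopen X (fun y => C y /\ interior X A y))
  /\ (rim_C X <-> zero_dimensional X).
Proof.
  split; [apply part1|]. split.
  - intros [B [[HBo HBb] HBc]].
    exists (is_clopen X). split; [split|]; auto.
    + intros V [H _]; auto.
    + intros U x HU Ux. destruct (HBb U x HU Ux) as [V [BV [Vx VU]]].
      destruct (part1 X V x (open_interior X V x (HBo V BV) Vx) (HBc V BV))
        as [C [_ [Cx [_ [_ Hcl]]]]].
      exists (fun y => C y /\ interior X V y). split; auto. split.
      * split; auto. apply open_interior; auto.
      * intros y [_ [W [_ [HW Wy]]]]; auto.
  - intros [B [HB HBc]]. exists B; split; auto.
    intros V BV. exists (fun W => W = (fun _ => False)). split.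
    + intros C ->. split; [apply open_empty|].
      unfold is_closed. eapply open_ext; [apply open_full|]. tauto.
    + intros x; split.
      * intros [Hcl Hni]. exfalso. apply Hni. apply open_interior.
        apply (HBc V BV). apply clopen_closure; auto.
      * intro H. destruct (H _ eq_refl).
Qed.
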